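(* Let $\mathcal B$ be a BMC with $\mathbf c^*_q<\infty$ for all $q\in\mathcal T$, and consider the Q-learning process with learning rates $\lambda_i\in[0,1]$, a fixed selection distribution $(p_q)_{q\in\mathcal T}$, and initial value $Q_0=\kappa\mathbf c^*$ for a scalar $\kappa\in[0,1]$. Then for all $i\in\mathbb N$, $\mathbf c^*\ge T(\mathbb E Q_i)\ge \mathbb E Q_{i+1}\ge\mathbb E Q_i$.
   Context: A branching Markov chain (BMC) is $\mathcal B=(\mathcal T,p,c)$ with $\mathcal T$ a finite set of types, $p(q)$ for each $q\in\mathcal T$ a probability distribution with finite support over finite lists $\mathcal T^*$ of types (the offspring distribution), and $c:\mathcal T\to\mathbb R_{>0}$ a strictly positive cost. (It is a BMDP with one action per type.) For a list $\alpha$, $|\alpha|$ is its length and $\alpha_i$ its $i$-th element. Its process: a list of entities; repeatedly some entity of type $q$ is replaced by a list $\beta$ drawn from $p(q)$, incurring cost $c(q)$, until the list is empty. $\mathbf c^*_q\in[0,\infty]$ denotes the expected total cost until extinction starting from the single entity $q$; equivalently $\mathbf c^*$ is the least fixed point in $[0,\infty]^{\mathcal T}$ of $F(\mathbf x)_q=c(q)+\sum_\alpha p(q)(\alpha)\sum_{i=1}^{|\alpha|}\mathbf x_{\alpha_i}$. Q-values for a BMC are vectors $Q\in\mathbb R_{\ge0}^{\mathcal T}$. The target operator is $T(Q)(q)=c(q)+\sum_{\alpha\in\mathcal T^*}p(q)(\alpha)\sum_{j=1}^{|\alpha|}Q(\alpha_j)$ (an affine map $T(Q)=BQ+\mathbf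 c$ with $B$ a nonnegative matrix). Q-learning process: given deterministic learning rates $\lambda_i\in[0,1]$, a probability distribution $(p_q)_{q\in\mathcal T}$ and an initial vector $Q_0\ge\mathbf 0$, at each step $i=0,1,2,\dots$ a type $q_i$ is selected with probability $p_{q_i}$ independently of all previous randomness, then a list $\beta^i$ is drawn from $p(q_i)$ independently, and $Q_{i+1}(q_i)=(1-\lambda_i)Q_i(q_i)+\lambda_i\big(c(q_i)+\sum_{j=1}^{|\beta^i|}Q_i(\beta^i_j)\big)$, while $Q_{i+1}(q)=Q_i(q)$ for $q\ne q_i$. $\mathbb E Q_i$ is the componentwise expectation; inequalities between vectors are componentwise. *)

(* Defs.v *)
From HB Require Import structures.
From mathcomp Require Import all_boot all_order all_algebra.
From mathcomp Require Import reals constructive_ereal.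
Set Implicit Arguments. Unset Strict Implicit. Unset Printing Implicit Defensive.
Import Order.TTheory GRing.Theory Num.Theory.
Local Open Scope ring_scope.

Section BMC.
Variables (R : realType) (T : finType).

(* An offspring distribution with finite support over lists of types is
   represented as a finite list of weighted outcomes (weight, list). *)
Definition offspring_dist := seq (R * seq T).

Definition is_distr (d : offspring_dist) : Prop :=
  (forall a, a \in d -> 0 <= a.1) /\ \sum_(a <- d) a.1 = 1.

Definition is_BMC (p : T -> offspring_dist) (c : T -> R) : Prop :=
  (forall q, is_distr (p q)) /\ (forall q, 0 < c q).

Definition Fbar (p : T -> offspring_dist) (c : T -> R) (x : T -> \bar R)
  : T -> \bar R :=
  fun q => ((c q)%:E + \sum_(a <- p q) (a.1)%:E * \sum_(y <- a.2) x y)%E.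

(* cs (a real, hence finite, vector) is the least fixed point of F in
   [0,oo]^T, i.e. cs = c* and c*_q < oo for all q. *)
Definition is_cstar (p : T -> offspring_dist) (c : T -> R) (cs : T -> R)
  : Prop :=
  (forall q, 0 <= cs q) /\
  Fbar p c (fun q => (cs q)%:E) = (fun q => (cs q)%:E) /\
  (forall x : T -> \bar R, (forall q, (0 <= x q)%E) -> Fbar p c x = x ->
     forall q, ((cs q)%:E <= x q)%E).

Definition Top (p : T -> offspring_dist) (c : T -> R) (Q : T -> R) : T -> R :=
  fun q => c q + \sum_(a <- p q) a.1 * \sum_(y <- a.2) Q y.

Definition Qupd (c : T -> R) (Q : T -> R) (q : T) (lam : R) (beta : seq T)
  : T -> R :=
  fun q' => if q' == q then (1 - lam) * Q q + lam * (c q + \sum_(y <- beta) Q y)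
            else Q q'.

(* The law of Q_i, as a finitely supported distribution (list of
   (probability, value) pairs): at step i a type q is selected with
   probability pq q, independently a list beta is drawn from p q. *)
Fixpoint Qlaw (p : T -> offspring_dist) (c : T -> R) (lam : nat -> R)
  (pq : T -> R) (Q0 : T -> R) (i : nat) : seq (R * (T -> R)) :=
  match i with
  | 0 => [:: (1, Q0)]
  | i'.+1 =>
      flatten [seq flatten [seq [seq (wQ.1 * pq q * b.1, Qupd c wQ.2 q (lam i') b.2)
                                | b <- p q] | q <- enum T]
              | wQ <- Qlaw p c lam pq Q0 i']
  end.

Definition EQ (p : T -> offspring_dist) (c : T -> R) (lam : nat -> R)
  (pq : T -> R) (Q0 : T -> R) (i : nat) : T -> R :=
  fun q => \sum_(wQ <- Qlaw p c lam pq Q0 i) wQ.1 * wQ.2 q.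

End BMC.

(* Main.v *)
Require Import Defs.
From HB Require Import structures.
From mathcomp Require Import all_boot all_order all_algebra.
From mathcomp Require Import reals constructive_ereal.
From mathcomp Require Import ring lra.
From Stdlib Require Import FunctionalExtensionality.
Import Order.TTheory GRing.Theory Num.Theory.
Local Open Scope ring_scope.

Section Aux.
Variables (R : realType) (T : finType) (p : T -> offspring_dist R T) (c : T -> R).

Lemma Top_lin (W : seq (R * (T -> R))) q :
  \sum_(x <- W) x.1 = 1 ->
  \sum_(x <- W) x.1 * Top p c x.2 q = Top p c (fun t => \sum_(x <- W) x.1 * x.2 t) q.
Proof.
move=> HW; rewrite /Top.
under eq_bigr => x _ do rewrite mulrDr.
rewrite big_split /= -big_distrl /= HW mul1r; congr (_ + _).
under eq_bigr => x _ do rewrite big_distrr /=.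
rewrite exchange_big /=; apply: eq_bigr => a _.
under eq_bigr => x _ do rewrite mulrCA.
rewrite -big_distrr /=; congr (_ * _).
under eq_bigr => x _ do rewrite big_distrr /=.
by rewrite exchange_big.
Qed.

Lemma sum_b (Hd : forall q, is_distr (p q)) (Q : T -> R) q q' l :
  \sum_(b <- p q) b.1 * Qupd c Q q l b.2 q' =
  Q q' + (q' == q)%:R * l * (Top p c Q q - Q q).
Proof.
have [_ H1] := Hd q.
rewrite /Qupd; case: eqP => [->|_].
  rewrite (eq_bigr (fun b => b.1 * ((1 - l) * Q q + l * c q) + l * (b.1 * \sum_(y <- b.2) Q y))); last first.
    by move=> b _; ring.
  rewrite big_split /= -big_distrl /= H1 mul1r -big_distrr /= /Top.
  rewrite mul1r; ring.
under eq_bigr => b _ do rewrite mulrC.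
by rewrite -big_distrr /= H1 mulr1 mul0r mul0r addr0.
Qed.

Lemma sum_q (pq : T -> R) (Hs : \sum_(q : T) pq q = 1) (X : T -> R) (Q : T -> R) q' :
  \sum_(q <- enum T) pq q * (Q q' + (q' == q)%:R * X q) = Q q' + pq q' * X q'.
Proof.
under eq_bigr => j _ do rewrite mulrDr mulrCA.
rewrite big_split /= -big_distrl /= big_enum /= Hs mul1r; congr (_ + _).
rewrite big_enum /= (bigD1 q') //= eqxx mul1r big1 ?addr0 // => j /negbTE.
by rewrite eq_sym => ->; rewrite mul0r.
Qed.

Variables (lam : nat -> R) (pq : T -> R) (Q0 : T -> R).
Hypothesis Hd : forall q, is_distr (p q).
Hypothesis Hs : \sum_(q : T) pq q = 1.

Lemma wsum i : \sum_(x <- Qlaw p c lam pq Q0 i) x.1 = 1.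
Proof.
elim: i => [|i IH] /=; first by rewrite big_cons big_nil addr0.
rewrite big_flatten /= big_map -{}IH; apply: eq_bigr => x _.
rewrite big_flatten /= big_map.
under eq_bigr => q _ do rewrite big_map /=.
under eq_bigr => q _ do under eq_bigr => b _ do rewrite -mulrA.
under eq_bigr => q _ do rewrite -big_distrr /=.
rewrite -big_distrr /=.
under eq_bigr => q _ do rewrite -big_distrr /= (proj2 (Hd q)) mulr1.
by rewrite big_enum /= Hs mulr1.
Qed.

Lemma step i q' :
  EQ p c lam pq Q0 i.+1 q' = EQ p c lam pq Q0 i q' +
    pq q' * lam i * (Top p c (EQ p c lam pq Q0 i) q' - EQ p c lam pq Q0 i q').
Proof.
rewrite /EQ /= big_flatten /= big_map.
rewrite (eq_bigr (fun x => x.1 * (x.2 q' + pq q' * lam i * (Top p c x.2 q' - x.2 q')))); last first.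
  move=> x _; rewrite big_flatten /= big_map.
  transitivity (\sum_(q <- enum T) x.1 * (pq q * (x.2 q' + (q' == q)%:R * (lam i * (Top p c x.2 q - x.2 q))))).
    apply: eq_bigr => q _; rewrite big_map.
    rewrite (eq_bigr (fun b => (x.1 * pq q) * (b.1 * Qupd c x.2 q (lam i) b.2 q'))); last first.
      by move=> b _; rewrite !mulrA.
    rewrite -big_distrr /= sum_b //; ring.
  rewrite -big_distrr /= sum_q //; ring.
rewrite (eq_bigr (fun x => (1 - pq q' * lam i) * (x.1 * x.2 q') + pq q' * lam i * (x.1 * Top p c x.2 q'))); last first.
  by move=> x _; ring.
rewrite big_split /= -!big_distrr /= Top_lin ?wsum //; ring.
Qed.

Lemma Top_mono (Q Q' : T -> R) : (forall t, Q t <= Q' t) ->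
  forall q, Top p c Q q <= Top p c Q' q.
Proof.
move=> HQ q; rewrite /Top lerD2l !big_seq; apply: ler_sum => a Ha.
apply: ler_wpM2l; first exact: (proj1 (Hd q)).
by apply: ler_sum => y _.
Qed.

Lemma Top_scale (k : R) (cs : T -> R) q :
  Top p c (fun t => k * cs t) q = (1 - k) * c q + k * Top p c cs q.
Proof.
rewrite /Top.
under eq_bigr => a _ do rewrite -big_distrr /= mulrCA.
rewrite -big_distrr /=; ring.
Qed.
End Aux.
Theorem lemma2 (R : realType) (T : finType)
  (p : T -> offspring_dist R T) (c : T -> R) (cs : T -> R)
  (lam : nat -> R) (pq : T -> R) (kappa : R) :
  is_BMC p c ->
  is_cstar p c cs ->
  (forall i, 0 <= lam i <= 1) ->
  (forall q, 0 <= pq q) -> \sum_(q : T) pq q = 1 ->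
  0 <= kappa <= 1 ->
  forall i : nat, forall q : T,
    let EQi := EQ p c lam pq (fun t => kappa * cs t) i in
    let EQi1 := EQ p c lam pq (fun t => kappa * cs t) i.+1 in
    Top p c EQi q <= cs q /\ EQi1 q <= Top p c EQi q /\ EQi q <= EQi1 q.
Proof.
move=> [Hd Hc] [Hcs0 [Hfix _]] Hlam Hpq Hs /andP [k0 k1].
have Tcs : forall q, Top p c cs q = cs q.
  move=> q; have := congr1 (fun f => f q) Hfix; rewrite /Fbar /Top.
  under eq_bigr => a _ do rewrite sumEFin -EFinM.
  rewrite sumEFin -EFinD; by case.
have Hmono := @Top_mono R T p c Hd.
set Q0 := (fun t => kappa * cs t).
have pq1 : forall q, pq q <= 1.
  move=> q; rewrite -Hs (bigD1 q) //= lerDl; exact: sumr_ge0.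
have Hst := @step R T p c lam pq Q0 Hd Hs.
have Inv : forall i, forall q, EQ p c lam pq Q0 i q <= cs q /\
    EQ p c lam pq Q0 i q <= Top p c (EQ p c lam pq Q0 i) q.
  elim=> [|i IH] q.
    have E0 : EQ p c lam pq Q0 0 = Q0.
      by apply: functional_extensionality => t; rewrite /EQ /= big_cons big_nil addr0 mul1r.
    rewrite E0 /Q0 Top_scale Tcs; have := Hcs0 q; have := Hc q; split; nra.
  have Hle : forall t, EQ p c lam pq Q0 i t <= EQ p c lam pq Q0 i.+1 t.
    move=> t; rewrite Hst; have := Hpq t; have := Hlam i; have := IH t.
    move=> [_ H2] /andP [l0 l1] H3; rewrite lerDl; apply: mulr_ge0; last by rewrite subr_ge0.
    exact: mulr_ge0.
  have Hup : forall t, EQ p c lam pq Q0 i.+1 t <= Top p c (EQ p c lam pq Q0 i) t.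
    move=> t; rewrite Hst; have := Hpq t; have := pq1 t; have := Hlam i; have := IH t.
    move=> [_ H2] /andP [l0 l1] H3 H4.
    have : 0 <= pq t * lam i <= 1 by apply/andP; split; nra.
    move=> /andP [a0 a1]; set a := pq t * lam i in a0 a1 *; nra.
  split.
    apply: le_trans (Hup q) _; rewrite -Tcs; apply: Hmono => t; exact: (proj1 (IH t)).
  apply: le_trans (Hup q) _; exact: Hmono.
move=> i q EQi EQi1; rewrite /EQi /EQi1.
have [H1 H2] := Inv i q.
split.
  rewrite -Tcs; apply: Hmono => t; exact: (proj1 (Inv i t)).
rewrite Hst; have := Hpq q; have := pq1 q; have := Hlam i.
move=> /andP [l0 l1] H3 H4.
have : 0 <= pq q * lam i <= 1 by apply/andP; split; nra.
move=> /andP [a0 a1]; set a := pq q * lam i in a0 a1 *; split; nra.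
Qed.
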